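(* Let $F$ be a global function field with full constant field $\mathbb{F}_q$ and rational places $P_1,\dots,P_n$; fix $m\ge1$. Let $r\ge t\ge0$ and $j_1,\dots,j_m\ge0$ be integers with $mn-(j_1+2j_2+\cdots+mj_m)\le t\le(m+1)n-(2j_1+\cdots+(m+1)j_m)$, and put $w=j_1+2j_2+\cdots+mj_m$. Then $$|\mathcal{U}(r,t;j_1,\dots,j_m)|=\binom{n}{j_m}\binom{n-j_m}{j_{m-1}}\cdots\binom{n-(j_2+\cdots+j_m)}{j_1}\binom{n-(j_1+\cdots+j_m)}{t-mn+w}\,C_{r-mn+w,\;t-mn+w}.$$
   Context: For a positive divisor $D$: $\overline D=\sum_{i=1}^n\min(m+1,v_{P_i}(D))P_i$, $j_\ell(D)=|\{i:v_{P_i}(D)=m-\ell\}|$. $\mathcal{U}(r,t;j_1,\dots,j_m)$ is the set of positive divisors $D$ with $\deg D=r$, $\deg\overline D=t$, $j_\ell(D)=j_\ell$ ($1\le\ell\le m$). For integers $a\ge b\ge0$ with $b\le n$, $C_{a,b}$ is the number of positive divisors $D$ of $F$ of degree $a$ with ${\rm supp}(\overline D)=\{Q_1,\dots,Q_b\}$ (i.e. $v_{Q_k}(D)\ge1$ for all $k$ and $v_P(D)=0$ for all other rational places $P$), for a fixed set $\{Q_1,\dots,Q_b\}$ of $b$ rational places; this number depends only on $b$, not on the chosen set. *)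

(* Defs.v *)
From mathcomp Require Import all_boot.
From mathcomp Require Import finmap.
Set Implicit Arguments. Unset Strict Implicit. Unset Printing Implicit Defensive.
Local Open Scope fset_scope.

(* Abstract model of the places of a global function field F:
   a type [P] of places with a degree map [deg].  A positive divisor is a
   finitely supported function  P -> nat  (its valuations). *)
Definition pdivisor (P : choiceType) := {fsfun P -> nat with 0%N}.

Definition ddeg (P : choiceType) (deg : P -> nat) (D : pdivisor P) : nat :=
  (\sum_(p <- finsupp D) D p * deg p)%N.

(* deg (Dbar) where Dbar = sum_i min(m+1, v_{P_i}(D)) P_i (all P_i rational) *)
Definition degbar (P : choiceType) (n m : nat) (Pr : 'I_n -> P) (D : pdivisor P)
  : nat := (\sum_(i < n) minn m.+1 (D (Pr i)))%N.

Definition jcount (P : choiceType) (n m : nat) (Pr : 'I_n -> P)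
  (D : pdivisor P) (l : nat) : nat := #|[pred i : 'I_n | D (Pr i) == m - l]|.

Definition inU (P : choiceType) (deg : P -> nat) (n m : nat) (Pr : 'I_n -> P)
  (r t : nat) (j : nat -> nat) (D : pdivisor P) : Prop :=
  [/\ ddeg deg D = r, degbar m Pr D = t &
      forall l, 1 <= l <= m -> jcount m Pr D l = j l].

(* D is counted by C_{a,b}, with the fixed set {Q_1..Q_b} = {P_1..P_b}:
   deg D = a, v_{P_i}(D) >= 1 for i < b and v_{P_i}(D) = 0 for i >= b. *)
Definition inC (P : choiceType) (deg : P -> nat) (n : nat) (Pr : 'I_n -> P)
  (a b : nat) (D : pdivisor P) : Prop :=
  ddeg deg D = a /\ forall i : 'I_n, (i < b -> 0 < D (Pr i)) /\ (b <= i -> D (Pr i) = 0).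

Definition enumerates (T : eqType) (s : seq T) (A : T -> Prop) : Prop :=
  uniq s /\ forall x, x \in s <-> A x.

(* Main.v *)
Require Import Defs.
From mathcomp Require Import all_boot.
From mathcomp Require Import finmap.
From mathcomp Require Import zify.
Set Implicit Arguments. Unset Strict Implicit. Unset Printing Implicit Defensive.

Lemma sum_bool (T : finType) (b : pred T) : \sum_(i : T) (b i : nat) = #|[set i | b i]|.
Proof. by rewrite -sum1dep_card [RHS]big_mkcond /=; apply: eq_bigr => i _; case: (b i). Qed.

Lemma sum_eqk k b : 1 <= k -> \sum_(1 <= l < b) l * (l == k) = (k < b) * k.
Proof.
move=> k1; elim: b => [|b IH]; first by rewrite big_geq.
case: b IH => [|b] IH; first by rewrite big_geq //; lia.
rewrite big_nat_recr // IH.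
case: eqP => E; case: (ltnP k b.+1) => H1; case: (ltnP k b.+2) => H2 /=; lia.
Qed.

Section Multi.
Variables (T : finType) (M : nat) (code : nat -> 'I_M) (d : 'I_M) (a : nat -> nat).

Definition Ysel K (S : {set T}) (h : {ffun T -> 'I_M}) (f : {ffun T -> 'I_M}) : bool :=
  [forall i, if i \in S then (f i == d) || [exists v : 'I_K, f i == code v] else f i == h i]
  && [forall v : 'I_K, #|[set i in S | f i == code v]| == a v].

Definition gset (f : {ffun T -> 'I_M}) K (S : {set T}) := [set i in S | f i == code K].

Lemma cnt_eq K S A (f : {ffun T -> 'I_M}) v :
  (forall u v, u < K.+1 -> v < K.+1 -> code u = code v -> u = v) ->
  gset f K S = A -> v < K ->
  #|[set i in S :\: A | f i == code v]| = #|[set i in S | f i == code v]|.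
Proof.
move=> Hinj gA vK.
have ne : code v != code K.
  by apply/eqP => E; have := Hinj _ _ (ltnW vK) (ltnSn K) E; lia.
apply: eq_card => i; rewrite !inE -gA inE.
case fv: (f i == code v); rewrite ?andbF //.
rewrite !andbT; case: (i \in S) => //=.
by move/eqP: fv => ->; rewrite ne.
Qed.

Lemma step_mem K S h A f :
  (forall u v, u < K.+1 -> v < K.+1 -> code u = code v -> u = v) ->
  (forall u, u < K.+1 -> code u != d) ->
  (Ysel K.+1 S h f && (gset f K S == A)) =
  ((A \subset S) && (#|A| == a K)) &&
     Ysel K (S :\: A) [ffun i => if i \in A then code K else h i] f.
Proof.
move=> Hinj Hd; apply/idP/idP.
  case/andP => /andP [/forallP H1 /forallP H2] /eqP gA.
  have sub : A \subset S.
    by rewrite -gA; apply/subsetP => i; rewrite inE => /andP[].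
  have cA : #|A| = a K.
    by rewrite -gA; exact: (eqP (H2 ord_max)).
  rewrite sub cA eqxx /=; apply/andP; split.
    apply/forallP => i; rewrite ffunE in_setD.
    case iA: (i \in A) => /=.
      by move: iA; rewrite -gA inE => /andP[].
    case iS: (i \in S) => /=; last by have := H1 i; rewrite iS.
    have := H1 i; rewrite iS => /orP [->//| /existsP [v /eqP fv]].
    apply/orP; right.
    case: (ltnP v K) => vK.
      by apply/existsP; exists (Ordinal vK); rewrite fv.
    have vK' : nat_of_ord v = K.
      by have := ltn_ord v; lia.
    by move: iA; rewrite -gA inE iS fv vK' eqxx.
  apply/forallP => v; rewrite (cnt_eq Hinj gA (ltn_ord v)).
  exact: (H2 (widen_ord (leqnSn K) v)).
case/andP => /andP [sub /eqP cA] /andP [/forallP H1 /forallP H2].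
have gA : gset f K S = A.
  apply/finset.setP => i; rewrite inE; have := H1 i; rewrite ffunE in_setD.
  case iA: (i \in A) => /=.
    by move=> /eqP ->; rewrite eqxx andbT; exact: (subsetP sub).
  case iS: (i \in S) => //=.
  case/orP => [/eqP -> | /existsP [v /eqP ->]].
    by rewrite eq_sym (negbTE (Hd _ (ltnSn K))).
  apply/negP => /eqP /Hinj; move=> /(_ (ltnW (ltn_ord v)) (ltnSn K)) E.
  by have := ltn_ord v; rewrite E ltnn.
rewrite gA eqxx andbT; apply/andP; split.
  apply/forallP => i; have := H1 i; rewrite ffunE in_setD.
  case iA: (i \in A) => /=.
    rewrite (subsetP sub _ iA) => /eqP ->; apply/orP; right.
    by apply/existsP; exists ord_max.
  case iS: (i \in S) => //=.
  case/orP => [->//| /existsP [v /eqP ->]]; apply/orP; right.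
  by apply/existsP; exists (widen_ord (leqnSn K) v).
apply/forallP => v; case: (ltnP v K) => vK.
  by rewrite -(cnt_eq Hinj gA vK); exact: (H2 (Ordinal vK)).
have vK' : nat_of_ord v = K.
      by have := ltn_ord v; lia.
by rewrite vK' -cA -gA.
Qed.

Lemma multi K :
  (forall u v, u < K -> v < K -> code u = code v -> u = v) ->
  (forall u, u < K -> code u != d) ->
  forall (S : {set T}) (h : {ffun T -> 'I_M}),
  #|[set f | Ysel K S h f]| = \prod_(0 <= v < K) 'C(#|S| - \sum_(v.+1 <= u < K) a u, a v).
Proof.
elim: K => [|K IH] Hinj Hd S h.
  rewrite big_geq //.
  rewrite -(cards1 [ffun i => if i \in S then d else h i]); apply: eq_card => f; rewrite !inE /Ysel.
  have -> : [forall v : 'I_0, #|[set i in S | f i == code v]| == a v].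
    by apply/forallP => -[].
  rewrite andbT; apply/forallP/eqP.
    move=> H; apply/ffunP => i; rewrite ffunE; have := H i.
    case: (i \in S) => /=; last by move/eqP.
    by case/orP => [/eqP //|/existsP [[]]].
  by move=> -> i; rewrite ffunE; case: (i \in S) => //=; rewrite eqxx.
have HinjK : forall u v, u < K -> v < K -> code u = code v -> u = v.
  by move=> u v uK vK; apply: Hinj; lia.
have HdK : forall u, u < K -> code u != d by move=> u uK; apply: Hd; lia.
rewrite -sum1_card (partition_big (fun f => gset f K S) predT) //=.
transitivity (\sum_(A : {set T}) ( if (A \subset S) && (#|A| == a K) then
   \prod_(0 <= v < K) 'C(#|S| - a K - \sum_(v.+1 <= u < K) a u, a v) else 0)).
  apply: eq_bigr => A _; rewrite sum1_card.
  have E : forall f, (f \in [set f | Ysel K.+1 S h f]) && (gset f K S == A) =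
     ((A \subset S) && (#|A| == a K)) &&
     Ysel K (S :\: A) [ffun i => if i \in A then code K else h i] f.
    by move=> f; rewrite inE step_mem.
  rewrite (eq_card E); case: ifP => H.
    case/andP: H => sub /eqP cA.
    have -> : #|S| - a K = #|S :\: A| by rewrite cardsD (setIidPr sub) cA.
    rewrite -(IH HinjK HdK _ [ffun i => if i \in A then code K else h i]); apply: eq_card => f; rewrite inE.
    by rewrite unfold_in.
  by apply: eq_card0 => f.
rewrite -big_mkcond /= sum_nat_const.
have -> : #|[pred A : {set T} | (A \subset S) && (#|A| == a K)]| = 'C(#|S|, a K).
  by rewrite -cards_draws; apply: eq_card => A; rewrite inE.
rewrite big_nat_recr //= (big_geq (leqnn K.+1)) subn0 mulnC; congr (_ * _).
apply: eq_big_nat => v /andP[_ vK].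
by rewrite big_nat_recr //= addnC subnDA.
Qed.
End Multi.

Section Main.
Variables (n m : nat) (hm : 1 <= m).

Definition code (u : nat) : 'I_(m.+2) := inord (if u == 0 then m.+1 else m - u).
Lemma codeE u : u <= m -> (code u : nat) = if u == 0 then m.+1 else m - u.
Proof. by move=> um; rewrite inordK //; case: (u == 0); lia. Qed.

Lemma ident (c : 'I_n -> 'I_(m.+2)) :
  \sum_(i < n) (c i : nat) + \sum_(1 <= l < m.+1) l * #|[set i | c i == code l]|
  = m * n + #|[set i | c i == code 0]|.
Proof.
have pw : forall x : 'I_(m.+2),
    (x : nat) + \sum_(1 <= l < m.+1) l * (x == code l) = m + (x == code 0).
  move=> x.
  have E : forall l, 1 <= l < m.+1 -> (x == code l) = ((x : nat) == m - l).
    move=> l /andP [l1 lm]; rewrite -val_eqE /= codeE; last by lia.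
    by have -> : (l == 0) = false by lia.
  have -> : \sum_(1 <= l < m.+1) l * (x == code l) = \sum_(1 <= l < m.+1) l * ((x : nat) == m - l).
    by apply: eq_big_nat => l lr; rewrite E.
  rewrite -val_eqE /= codeE // eqxx.
  have := ltn_ord x => xm.
  case: (ltnP x m) => xlt.
    have -> : \sum_(1 <= l < m.+1) l * ((x : nat) == m - l) = \sum_(1 <= l < m.+1) l * (l == m - x).
      apply: eq_big_nat => l /andP [l1 lm]; congr (_ * _); congr nat_of_bool.
      by apply/eqP/eqP; lia.
    rewrite sum_eqk; last by lia.
    have -> : m - x < m.+1 by lia.
    have -> : ((x : nat) == m.+1) = false by lia.
    lia.
  rewrite big1_seq; last first.
    move=> l; rewrite mem_index_iota => lr.
    have -> : ((x : nat) == m - l) = false by lia.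
    by rewrite muln0.
  case: (ltnP x m.+1) => xl.
    have -> : ((x : nat) == m.+1) = false by lia.
    lia.
  have -> : ((x : nat) == m.+1) by lia.
  lia.
have S1 : \sum_(i < n) (c i : nat) + \sum_(i < n) \sum_(1 <= l < m.+1) l * (c i == code l)
          = \sum_(i < n) (m + (c i == code 0)).
  by rewrite -big_split /=; apply: eq_bigr => i _; rewrite pw.
rewrite big_split /= sum_nat_const card_ord mulnC sum_bool in S1.
rewrite -S1; congr (_ + _).
rewrite exchange_big /=; apply: eq_bigr => l _.
by rewrite -big_distrr /= sum_bool.
Qed.


End Main.

Section Div.
Variables (P : choiceType) (deg : P -> nat) (n : nat) (Pr : 'I_n -> P)
  (Pr_inj : injective Pr) (Pr_deg : forall i, deg (Pr i) = 1)
  (m : nat) (hm : 1 <= m) (r t : nat) (j : nat -> nat) (htr : t <= r).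
Local Notation w := (\sum_(1 <= l < m.+1) l * j l).
Local Notation s := (t + w - m * n).
Hypothesis (hlow : m * n <= t + w).

Definition pat (D : pdivisor P) : {ffun 'I_n -> 'I_(m.+2)} :=
  [ffun i => inord (minn m.+1 (D (Pr i)))].
Lemma patE D i : (pat D i : nat) = minn m.+1 (D (Pr i)).
Proof. by rewrite ffunE inordK //; lia. Qed.

Definition aa u := if u == 0 then s else j u.
Definition Valid (c : {ffun 'I_n -> 'I_(m.+2)}) := Ysel (code m) (inord m) aa m.+1 setT [ffun=> inord m] c.

Lemma valid_pat D : Valid (pat D) =
  [forall v : 'I_m.+1, #|[set i in setT | pat D i == code m v]| == aa v].
Proof.
rewrite /Valid /Ysel; apply: andb_idl => _; apply/forallP => i; rewrite in_setT.
apply/orP; rewrite -val_eqE /= patE inordK; last by lia.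
case: (ltngtP (minn m.+1 (D (Pr i))) m) => H.
- have Hl : m - minn m.+1 (D (Pr i)) < m.+1 by lia.
  right; apply/existsP; exists (Ordinal Hl).
  rewrite -val_eqE /= patE codeE /=; last by lia.
  have -> : (m - minn m.+1 (D (Pr i)) == 0) = false by lia.
  apply/eqP; lia. exact: hm.
- right; apply/existsP; exists ord0.
  by rewrite -val_eqE /= patE codeE //=; apply/eqP; lia.
- by left.
Qed.

Lemma degbarE D : degbar m Pr D = \sum_(i < n) (pat D i : nat).
Proof. by apply: eq_bigr => i _; rewrite patE. Qed.

Lemma jcountE D l : 1 <= l <= m -> jcount m Pr D l = #|[set i | pat D i == code m l]|.
Proof.
move=> /andP [l1 lm]; apply: eq_card => i; rewrite !inE -val_eqE /= patE codeE //.
have -> : (l == 0) = false by lia.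
by apply/eqP/eqP; lia.
Qed.

Lemma charU D : inU deg m Pr r t j D <-> ddeg deg D = r /\ Valid (pat D).
Proof.
have Id := ident hm (pat D); rewrite -degbarE in Id.
split.
  case=> dD bD jD; split => //; rewrite valid_pat; apply/forallP => v; rewrite /aa.
  have E : forall l, #|[set i in setT | pat D i == code m l]| = #|[set i | pat D i == code m l]|.
    by move=> l; apply: eq_card => i; rewrite !inE.
  rewrite E; have [v0|v0] := eqVneq (v : nat) 0.
    rewrite v0 /=; apply/eqP; move: Id; rewrite bD.
    have -> : \sum_(1 <= l < m.+1) l * #|[set i | pat D i == code m l]| = w.
      by apply: eq_big_nat => l lr; rewrite -jcountE ?jD.
    by move=> ->; rewrite addKn.
  rewrite -jcountE ?jD //; have := ltn_ord v; lia.
case=> dD; rewrite valid_pat => /forallP V.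
have E : forall l, 1 <= l <= m -> jcount m Pr D l = j l.
  move=> l lr; rewrite jcountE //.
  have Hl : l < m.+1 by lia.
  have := V (Ordinal Hl); rewrite /aa /=.
  have -> : (l == 0) = false by lia.
  by move=> /eqP <-; apply: eq_card => i; rewrite !inE.
split => //.
have := V ord0; rewrite /aa /= => /eqP C0.
have Ew : \sum_(1 <= l < m.+1) l * #|[set i | pat D i == code m l]| = w.
  by apply: eq_big_nat => l lr; rewrite -jcountE ?E.
rewrite Ew in Id.
have C0' : #|[set i | pat D i == code m 0]| = s.
  by rewrite -C0; apply: eq_card => i; rewrite !inE.
lia.
Qed.


Lemma sub_filter_big (F : P -> nat) (L u : seq P) : uniq L -> uniq u -> {subset u <= L} ->
  \sum_(p <- L | p \in u) F p = \sum_(p <- u) F p.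
Proof.
move=> uL uu sub; rewrite -big_filter; apply: perm_big; apply: uniq_perm.
- exact: filter_uniq.
- exact: uu.
- by move=> x; rewrite mem_filter; apply/andP/idP => [[]//|xu]; split => //; apply: sub.
Qed.

Lemma uniq_codom : uniq (codom Pr).
Proof. by rewrite codomE map_inj_uniq ?enum_uniq. Qed.

Lemma ddeg_split (D : pdivisor P) (L : seq P) : uniq L ->
  {subset finsupp D <= L} -> {subset codom Pr <= L} ->
  ddeg deg D = \sum_(i < n) D (Pr i) + \sum_(p <- L | p \notin codom Pr) D p * deg p.
Proof.
move=> uL sD sR.
have E1 : ddeg deg D = \sum_(p <- L) D p * deg p.
  rewrite /ddeg -(sub_filter_big _ uL (fset_uniq _) sD) [RHS](bigID (fun p => p \in finsupp D)) /=.
  rewrite [X in _ = _ + X]big1 ?addn0 // => p; rewrite mem_finsupp negbK => /eqP ->.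
  by [].
rewrite E1 (bigID (fun p => p \in codom Pr)) /= (sub_filter_big _ uL uniq_codom sR) codomE big_map.
congr (_ + _); rewrite big_enum /=; apply: eq_bigr => i _; by rewrite Pr_deg muln1.
Qed.


Definition Rset : {fset P} := seq_fset tt (codom Pr).
Definition mkdiv (S : {fset P}) (F : P -> nat) : pdivisor P := [fsfun x in S => F x | 0%N]%fset.
Lemma mkdivE S F : (forall x, x \notin S -> F x = 0%N) -> forall x, mkdiv S F x = F x.
Proof. by move=> H x; rewrite /mkdiv fsfun_fun; case: ifP => // /negbT /H ->. Qed.

Definition ratidx x := [pick i | Pr i == x].
Lemma ratidxPr k : ratidx (Pr k) = Some k.
Proof.
rewrite /ratidx; case: pickP => [i /eqP /Pr_inj -> //|/(_ k)].
by rewrite eqxx.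
Qed.
Lemma ratidxN x : x \notin codom Pr -> ratidx x = None.
Proof.
move=> xN; rewrite /ratidx; case: pickP => [i /eqP Ei|//].
by move: xN; rewrite -Ei codom_f.
Qed.

Lemma mkdivE2 (D : pdivisor P) (F : P -> nat) :
  (forall x, x \notin codom Pr -> F x = D x) ->
  forall x, mkdiv (finsupp D `|` Rset)%fset F x = F x.
Proof.
move=> H; apply: mkdivE => x; rewrite in_fsetU negb_or => /andP [xD xR].
have xR' : x \notin codom Pr by rewrite /Rset seq_fsetE in xR.
by rewrite H //; move: xD; rewrite mem_finsupp negbK => /eqP.
Qed.

Lemma validE c : Valid c -> (forall l, 1 <= l <= m -> #|[set i | c i == code m l]| = j l)
   /\ #|[set i | c i == code m 0]| = s.
Proof.
case/andP => _ /forallP V; split.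
  move=> l lr; have Hl : l < m.+1 by lia.
  have := V (Ordinal Hl); rewrite /aa /=.
  have -> : (l == 0) = false by lia.
  by move/eqP <-; apply: eq_card => i; rewrite !inE.
by have := V ord0; rewrite /aa /= => /eqP <-; apply: eq_card => i; rewrite !inE.
Qed.

Lemma sum_c c : Valid c -> \sum_(i < n) (c i : nat) = t.
Proof.
have Id := ident hm c; case/validE => Hj H0; rewrite H0 in Id.
have Ew : \sum_(1 <= l < m.+1) l * #|[set i | c i == code m l]| = w.
  by apply: eq_big_nat => l lr; rewrite Hj.
rewrite Ew in Id; lia.
Qed.

Section Fiber.
Variable c : {ffun 'I_n -> 'I_(m.+2)}.
Hypothesis Hs : #|[set i | c i == code m 0]| = s.
Local Notation big i := (c i == code m 0).
Definition lst := [seq i <- enum 'I_n | big i] ++ [seq i <- enum 'I_n | ~~ big i].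
Lemma size_lst : size lst = n.
Proof. by rewrite size_cat !size_filter count_predC size_enum_ord. Qed.
Lemma mem_lst i : i \in lst.
Proof. have E : i \in enum 'I_n := mem_enum _ i. by rewrite mem_cat !(mem_filter _ _ (enum 'I_n)) E; case: (big i). Qed.
Definition sig (i : 'I_n) : 'I_n := insubd i (index i lst).
Lemma sigE i : (sig i : nat) = index i lst.
Proof. by rewrite /sig insubdK // unfold_in /= -[X in _ < X]size_lst index_mem mem_lst. Qed.
Lemma sig_inj : injective sig.
Proof.
move=> i1 i2 /(congr1 val); rewrite /= !sigE.
by move=> E; exact: (index_inj i1 (mem_lst i1) (mem_lst i2) E).
Qed.
Lemma sig_lt i : (sig i < s) = big i.
Proof.
have Es : size [seq i <- enum 'I_n | big i] = s.
  have U : uniq [seq i <- enum 'I_n | big i] by apply: filter_uniq; apply: enum_uniq.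
  move/card_uniqP: U => <-; rewrite -Hs; apply: eq_card => x.
  by rewrite inE (mem_filter _ _ (enum 'I_n)) (mem_enum _ x) andbT.
have E : i \in enum 'I_n := mem_enum _ i.
rewrite sigE index_cat (mem_filter _ _ (enum 'I_n)) E andbT.
case Bi: (big i).
  by rewrite -Es index_mem (mem_filter _ _ (enum 'I_n)) Bi E.
by rewrite Es; lia.
Qed.

Definition sigi := invF sig_inj.
Definition Phi (D : pdivisor P) : pdivisor P :=
  mkdiv (finsupp D `|` Rset)%fset (fun x => match ratidx x with
    | Some k => if k < s then D (Pr (sigi k)) - m else 0 | None => D x end).
Definition Psi (E : pdivisor P) : pdivisor P :=
  mkdiv (finsupp E `|` Rset)%fset (fun x => match ratidx x with
    | Some i => if big i then E (Pr (sig i)) + m else c i | None => E x end).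
Lemma PhiPr D k : Phi D (Pr k) = if k < s then D (Pr (sigi k)) - m else 0.
Proof. by rewrite /Phi mkdivE2 ?ratidxPr // => x /ratidxN ->. Qed.
Lemma PhiN D x : x \notin codom Pr -> Phi D x = D x.
Proof. by move=> xN; rewrite /Phi mkdivE2 ?ratidxN // => y /ratidxN ->. Qed.
Lemma PsiPr E i : Psi E (Pr i) = if big i then E (Pr (sig i)) + m else c i.
Proof. by rewrite /Psi mkdivE2 ?ratidxPr // => x /ratidxN ->. Qed.
Lemma PsiN E x : x \notin codom Pr -> Psi E x = E x.
Proof. by move=> xN; rewrite /Psi mkdivE2 ?ratidxN // => y /ratidxN ->. Qed.

Lemma bigD D i : pat D = c -> big i = (m < D (Pr i)).
Proof. by move=> <-; rewrite -val_eqE /= patE codeE //=; apply/eqP/idP; lia. Qed.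
Lemma nbigD D i : pat D = c -> ~~ big i -> (c i : nat) = D (Pr i).
Proof. by move=> Ep; rewrite (bigD _ Ep) -Ep patE => H; lia. Qed.

Lemma PsiPhi D : pat D = c -> Psi (Phi D) = D.
Proof.
move=> Ep; apply/fsfunP => x; case: (boolP (x \in codom Pr)) => [/codomP [i ->] | xN].
  rewrite PsiPr PhiPr sig_lt; case B: (big i).
    by rewrite /sigi invF_f; move: B; rewrite (bigD _ Ep) => H; lia.
  by rewrite (nbigD Ep) ?B.
by rewrite PsiN // PhiN.
Qed.

Lemma PhiPsi E : inC deg Pr (r + w - m * n) s E -> Phi (Psi E) = E.
Proof.
case=> _ HE; apply/fsfunP => x; case: (boolP (x \in codom Pr)) => [/codomP [k ->] | xN].
  rewrite PhiPr PsiPr -sig_lt /sigi f_invF.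
  case: ifP => ks; first by rewrite ks addnK.
  by have [_ ->] := HE k; [|lia].
by rewrite PhiN // PsiN.
Qed.


Lemma bigc i : big i -> (c i : nat) = m.+1.
Proof. by rewrite -val_eqE /= codeE // => /eqP. Qed.

Lemma commonL (D1 D2 : pdivisor P) : exists L, [/\ uniq L, {subset finsupp D1 <= L},
   {subset finsupp D2 <= L} & {subset codom Pr <= L}].
Proof.
exists (undup (finsupp D1 ++ finsupp D2 ++ codom Pr)); split.
- exact: undup_uniq.
- by move=> x xD; rewrite mem_undup !mem_cat xD.
- by move=> x xD; rewrite mem_undup !mem_cat xD orbT.
- by move=> x xD; rewrite mem_undup !mem_cat xD !orbT.
Qed.

Lemma Phi_deg D : inU deg m Pr r t j D -> pat D = c -> ddeg deg (Phi D) = r + w - m * n.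
Proof.
move=> [dD bD _] Ep.
have [L [uL s1 s2 s3]] := commonL D (Phi D).
have E1 := ddeg_split uL s1 s3; have E2 := ddeg_split uL s2 s3.
have EN : \sum_(p <- L | p \notin codom Pr) Phi D p * deg p =
          \sum_(p <- L | p \notin codom Pr) D p * deg p.
  by apply: eq_bigr => p pN; rewrite PhiN.
have EP : \sum_(k < n) Phi D (Pr k) = \sum_(i < n) (if big i then D (Pr i) - m else 0).
  rewrite (reindex_inj sig_inj) /=; apply: eq_bigr => i _.
  by rewrite PhiPr sig_lt /sigi invF_f.
have EQ : \sum_(i < n) D (Pr i) + s =
   \sum_(i < n) (if big i then D (Pr i) - m else 0) + \sum_(i < n) (pat D i : nat).
  rewrite -{1}Hs -sum_bool -!big_split /=; apply: eq_bigr => i _.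
  by rewrite patE (bigD _ Ep); case: (ltnP m (D (Pr i))) => H /=; lia.
rewrite -degbarE bD in EQ.
rewrite E2 EN EP; rewrite E1 in dD.
set A := \sum_(i < n) D (Pr i) in EQ dD. set B := \sum_(i < n) (if c i == code m 0 then D (Pr i) - m else 0) in EQ *. set N := \sum_(p <- L | p \notin codom Pr) D p * deg p in dD *. have hl := hlow; have ht := htr. set W := w in EQ hl *. set MN := m * n in EQ hl *. lia.
Qed.

Lemma Phi_inC D : inU deg m Pr r t j D -> pat D = c -> inC deg Pr (r + w - m * n) s (Phi D).
Proof.
move=> HU Ep; split; first exact: Phi_deg.
move=> i; rewrite PhiPr; split => H.
  rewrite H; have : big (sigi i) by rewrite -sig_lt /sigi f_invF.
  by rewrite (bigD _ Ep) => H'; lia.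
by have -> : (i < s) = false by lia.
Qed.

Lemma Psi_pat E : inC deg Pr (r + w - m * n) s E -> pat (Psi E) = c.
Proof.
case=> _ HE; apply/ffunP => i; apply: val_inj; rewrite /= patE PsiPr.
case B: (big i).
  rewrite (bigc B); have [H _] := HE (sig i).
  by have := H (eq_ind _ is_true B _ (esym (sig_lt i))); lia.
by have := ltn_ord (c i); lia.
Qed.

Lemma Psi_deg E : Valid c -> inC deg Pr (r + w - m * n) s E -> ddeg deg (Psi E) = r.
Proof.
move=> Vc [dE HE].
have [L [uL s1 s2 s3]] := commonL E (Psi E).
have E1 := ddeg_split uL s1 s3; have E2 := ddeg_split uL s2 s3.
have EN : \sum_(p <- L | p \notin codom Pr) Psi E p * deg p =
          \sum_(p <- L | p \notin codom Pr) E p * deg p.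
  by apply: eq_bigr => p pN; rewrite PsiN.
have EP : \sum_(i < n) (if big i then E (Pr (sig i)) else 0) = \sum_(k < n) E (Pr k).
  rewrite [RHS](reindex_inj sig_inj) /=; apply: eq_bigr => i _.
  rewrite -sig_lt; case: ifP => // H.
  by have [_ ->] := HE (sig i); [|lia].
have EQ : \sum_(i < n) Psi E (Pr i) + s =
   \sum_(i < n) (if big i then E (Pr (sig i)) else 0) + \sum_(i < n) (c i : nat).
  rewrite -{1}Hs -sum_bool -!big_split /=; apply: eq_bigr => i _.
  rewrite PsiPr; case B: (big i) => /=; last by lia.
  by rewrite (bigc B); lia.
rewrite EP (sum_c Vc) in EQ.
rewrite E2 EN; rewrite E1 in dE.
have hl := hlow; have ht := htr. set W := w in EQ hl dE *. set MN := m * n in EQ hl dE *. set ES := \sum_(i < n) E (Pr i) in EQ dE. set PS := \sum_(i < n) Psi E (Pr i) in EQ *. set NN := \sum_(p <- L | p \notin codom Pr) E p * deg p in dE *. lia.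
Qed.

End Fiber.

Variables (sU sC : seq (pdivisor P)).
Hypothesis hU : enumerates sU (inU deg m Pr r t j).
Hypothesis hC : enumerates sC (inC deg Pr (r + w - m * n) s).

Lemma fiber c : Valid c -> size [seq D <- sU | pat D == c] = size sC.
Proof.
move=> Vc; have [_ Hs] := validE Vc.
case: hU => uU mU; case: hC => uC mC.
have memUc : forall D, (D \in [seq D <- sU | pat D == c]) = (pat D == c) && (D \in sU).
  by move=> D; rewrite mem_filter.
apply/eqP; rewrite eqn_leq; apply/andP; split.
  have inj : {in [seq D <- sU | pat D == c] &, injective (Phi c)}.
    move=> D1 D2; rewrite !memUc => /andP [/eqP E1 _] /andP [/eqP E2 _] E.
    by rewrite -(PsiPhi Hs E1) -(PsiPhi Hs E2) E.
  rewrite -(size_map (Phi c)); apply: uniq_leq_size.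
    by rewrite (map_inj_in_uniq inj) filter_uniq.
  move=> E /mapP [D]; rewrite memUc => /andP [/eqP Ep /mU HD] ->.
  by apply/mC; apply: Phi_inC.
have inj : {in sC &, injective (Psi c)}.
  move=> E1 E2 /mC H1 /mC H2 E.
  by rewrite -(PhiPsi Hs H1) -(PhiPsi Hs H2) E.
rewrite -(size_map (Psi c)); apply: uniq_leq_size.
  by rewrite (map_inj_in_uniq inj).
move=> D /mapP [E /mC HE ->]; rewrite memUc (Psi_pat Hs HE) eqxx /=.
apply/mU/charU; split; first exact: Psi_deg.
by rewrite (Psi_pat Hs HE).
Qed.

Lemma sum_count (l : seq (pdivisor P)) :
  \sum_(c | Valid c) count (fun D => pat D == c) l = count (fun D => Valid (pat D)) l.
Proof.
elim: l => [|x l IH] /=; first by rewrite big1.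
rewrite big_split /= IH; congr (_ + _).
case V: (Valid (pat x)).
  rewrite (bigD1 (pat x)) //= eqxx big1 // => c /andP [_ /negbTE].
  by rewrite eq_sym => ->.
by rewrite big1 // => c Vc; case: eqP => // E; rewrite E Vc in V.
Qed.

Lemma sizeU : size sU = #|[set c | Valid c]| * size sC.
Proof.
have allV : count (fun D => Valid (pat D)) sU = size sU.
  apply/eqP; rewrite -all_count; apply/allP => D /hU.2 /charU [].
  by [].
rewrite -allV -sum_count -sum_nat_const.
rewrite (eq_bigr (fun _ => size sC)) => [|c Vc]; last by rewrite -size_filter fiber.
by apply: eq_bigl => c; rewrite inE.
Qed.

Lemma cardValid : #|[set c | Valid c]| =
  \prod_(1 <= l < m.+1) 'C(n - \sum_(l.+1 <= k < m.+1) j k, j l)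
  * 'C(n - \sum_(1 <= k < m.+1) j k, s).
Proof.
rewrite /Valid multi; first last.
- move=> u uK; apply/eqP => /(congr1 val); rewrite /= codeE ?inordK //; try lia.
  by case: eqP => ?; lia.
- move=> u v uK vK /(congr1 val); rewrite /= !codeE; try lia.
  by case: eqP => ?; case: eqP => ?; lia.
rewrite cardsT card_ord big_nat_recl // /aa eqxx /= mulnC; congr (_ * _).
  rewrite [RHS]big_add1 /=; apply: eq_big_nat => i ir /=.
  congr 'C(_ - _, _); apply: eq_big_nat => u /andP [u2 _].
  by have -> : (u == 0) = false by lia.
congr 'C(_ - _, _); apply: eq_big_nat => u /andP [u2 _].
by have -> : (u == 0) = false by lia.
Qed.

End Div.

Theorem lemma3p5
  (P : choiceType) (deg : P -> nat)
  (deg_pos : forall p, 0 < deg p)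
  (deg_fin : forall d, exists s : seq P, forall p, deg p <= d -> p \in s)
  (n : nat) (Pr : 'I_n -> P) (Pr_inj : injective Pr)
  (Pr_deg : forall i, deg (Pr i) = 1)
  (Pr_all : forall p, deg p = 1 -> exists i, Pr i = p)
  (m : nat) (hm : 1 <= m)
  (r t : nat) (j : nat -> nat) (htr : t <= r)
  (hlow : m * n <= t + \sum_(1 <= l < m.+1) l * j l)
  (hup : t + \sum_(1 <= l < m.+1) l.+1 * j l <= m.+1 * n)
  (sU sC : seq (pdivisor P))
  (hU : enumerates sU (inU deg m Pr r t j))
  (hC : enumerates sC (inC deg Pr (r + \sum_(1 <= l < m.+1) l * j l - m * n)
                                  (t + \sum_(1 <= l < m.+1) l * j l - m * n))) :
  size sU =
    (\prod_(1 <= l < m.+1) 'C(n - \sum_(l.+1 <= k < m.+1) j k, j l))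
    * 'C(n - \sum_(1 <= k < m.+1) j k, t + \sum_(1 <= l < m.+1) l * j l - m * n)
    * size sC.
Proof.
rewrite (sizeU Pr_inj Pr_deg hm htr hlow hU hC) (cardValid hm htr hlow).
reflexivity.
Qed.
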